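(* Let $G$ be a finite simple graph and let $c>0$ and $t>0$ be constants with $t\le c\,\frac{\epsilon(G)}{|G|}$. Then $$Ldyn_t(G)<\frac{c}{c+1}|G|.$$
   Context: For a graph $G$, $|G|$ is its number of vertices and $\epsilon(G)=|E(G)|/|G|$. A threshold assignment is a function $\tau:V(G)\to\{0,1,2,\dots\}$ with $\tau(v)\le deg_G(v)$ for every $v$; its average is $\overline{\tau}=\sum_v\tau(v)/|G|$. A set $D\subseteq V(G)$ is a $\tau$-dynamo if $V(G)$ can be partitioned into $D_0=D,D_1,\dots,D_k$ such that for each $1\le i\le k$, $D_i$ consists of all vertices not in $D_0\cup\dots\cup D_{i-1}$ having at least $\tau(v)$ neighbors in $D_0\cup\dots\cup D_{i-1}$; $dyn_\tau(G)$ is the minimum size of a $\tau$-dynamo. $Ldyn_t(G)=\max\{dyn_\tau(G):\overline{\tau}\le t\}$. *)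

(* Defs.v *)
From mathcomp Require Import all_boot all_order all_algebra.
From mathcomp Require Import boolp.
Set Implicit Arguments. Unset Strict Implicit. Unset Printing Implicit Defensive.
Import Order.TTheory GRing.Theory Num.Theory.

Section Graph.
Variables (V : finType) (e : rel V).

Definition nbhd (v : V) : {set V} := [set u | e v u].
Definition deg (v : V) : nat := #|nbhd v|.

Definition edges : {set {set V}} :=
  [set E : {set V} | [exists x, exists y, e x y && (E == [set x; y])]].

Definition eps (R : numFieldType) : R := (#|edges|)%:R / (#|V|)%:R.

(* threshold assignments; values are naturals bounded by deg <= |V| *)
Definition thr := {ffun V -> 'I_(#|V|.+1)}.
Definition valid_thr (tau : thr) : bool := [forall v, (tau v : nat) <= deg v].
Definition avg_thr (R : numFieldType) (tau : thr) : R :=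
  (\sum_(v : V) (tau v : nat))%:R / (#|V|)%:R.

Fixpoint activated (tau : thr) (D : {set V}) (i : nat) : {set V} :=
  match i with
  | 0 => D
  | i'.+1 => let A := activated tau D i' in
             A :|: [set v in ~: A | (tau v : nat) <= #|nbhd v :&: A|]
  end.

Definition is_dynamo (tau : thr) (D : {set V}) : Prop :=
  exists k, activated tau D k = [set: V].

(* dyn_tau(G): minimum size of a tau-dynamo (V itself is one, so the min is attained) *)
Definition dyn (tau : thr) : nat :=
  \big[minn/#|V|]_(D : {set V} | `[< is_dynamo tau D >]) #|D|.

Definition Ldyn (R : numFieldType) (t : R) : nat :=
  \max_(tau : thr | valid_thr tau && (avg_thr R tau <= t)%R) dyn tau.

End Graph.

(* Main.v *)
Require Import Defs.
From mathcomp Require Import all_boot all_order all_algebra.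
From mathcomp Require Import boolp ring lra.
Import Order.TTheory GRing.Theory Num.Theory.
Local Open Scope ring_scope.

Section Aux.
Variables (V : finType) (e : rel V) (e_irr : irreflexive e) (tau : thr V).

Lemma act_sub (D : {set V}) k : D \subset activated e tau D k.
Proof. elim: k => [|k IH] //=; exact: subset_trans IH (subsetUl _ _). Qed.

Lemma act_monoD (D D' : {set V}) k : D \subset D' -> activated e tau D k \subset activated e tau D' k.
Proof.
move=> sDD'; elim: k => [|k IH] //=.
apply/subsetP => x; rewrite !inE => /orP[xA|].
  by rewrite (subsetP IH x xA).
case/andP => xA Hx.
case xA': (x \in activated e tau D' k) => //=.
rewrite (leq_trans Hx) // subset_leq_card // setIS //.
Qed.

Lemma min_le (T : eqType) (r : seq T) (P : pred T) (F : T -> nat) x D0 :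
  D0 \in r -> P D0 -> (\big[minn/x]_(i <- r | P i) F i <= F D0)%N.
Proof.
elim: r => [|a r IH] //; rewrite in_cons big_cons => /orP[/eqP<- ->|Hr PD].
  exact: geq_minl.
case: (P a); last exact: IH.
exact: leq_trans (geq_minr _ _) (IH Hr PD).
Qed.

Lemma dyn_le (D : {set V}) k : activated e tau D k = [set: V] -> (dyn e tau <= #|D|)%N.
Proof.
move=> Hk; rewrite /dyn.
apply: (@min_le _ (index_enum _) (fun D => `[< is_dynamo e tau D >]) (fun D : {set V} => #|D|) _ D (mem_index_enum _)).
by apply/asboolP; exists k.
Qed.

End Aux.


Section Alg.
Variable R : realFieldType.
Definition phi (a d : nat) : R := if (a <= d)%N then a%:R / d.+1%:R else 1.

Lemma phi_identity (a d r : nat) :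
  (if (a <= d)%N then 0 else 1) + d%:R * phi a d.-1 + r%:R * phi a d
  = (d + r).+1%:R * phi a d.
Proof.
rewrite /phi; case: (leqP a d) => Had.
  case: d Had => [|d] Had /=.
    by move: Had; rewrite leqn0 => /eqP->; rewrite !mul0r ?mulr0 ?add0r ?mul0r ?addr0.
  case: (leqP a d) => Had'.
    have h1 : (d.+1%:R : R) != 0 by rewrite pnatr_eq0.
    have h2 : (d.+2%:R : R) != 0 by rewrite pnatr_eq0.
    move: h1 h2; rewrite add0r ?natrD -!natr1 ?natrD => h1 h2.
    field; by rewrite h2 h1.
  have -> : a = d.+1 by apply/eqP; rewrite eqn_leq Had.
  have h1 : (d.+2%:R : R) != 0 by rewrite pnatr_eq0.
  move: h1; rewrite add0r ?natrD -!natr1 ?natrD => h1.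
  field; by rewrite h1.
have -> : (a <= d.-1)%N = false.
  by apply/negbTE; rewrite -ltnNge (leq_ltn_trans (leq_pred d)).
by rewrite !mulr1 -natr1 natrD; ring.
Qed.
End Alg.


Section Main.
Variables (R : realFieldType) (V : finType) (e : rel V) (e_irr : irreflexive e) (tau : thr V).

Definition dW (W : {set V}) u := #|nbhd e u :&: W|.
Definition Phi (W : {set V}) : R := \sum_(u in W) phi R (tau u) (dW W u).
Definition cost (W : {set V}) v : R := if ((tau v : nat) <= dW W v)%N then 0 else 1.

Lemma nbhd_irr u : u \notin nbhd e u.
Proof. by rewrite inE e_irr. Qed.

Lemma per_u (W : {set V}) u : u \in W ->
  cost W u + \sum_(v in W :\ u) phi R (tau u) (dW (W :\ v) u)
  = #|W|%:R * phi R (tau u) (dW W u).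
Proof.
move=> uW.
set d := dW W u.
have Hn : nbhd e u :&: W = [set v in W :\ u | e u v].
  apply/setP => v; rewrite !inE; case: (boolP (e u v)) => euv; rewrite ?andbF ?andbT //.
  by case: eqP => // vu; move: euv; rewrite vu e_irr.
rewrite (bigID (e u)) /=.
rewrite (eq_bigr (fun _ => phi R (tau u) d.-1)); last first.
  move=> v /andP[vWu euv]; rewrite /dW.
  have -> : nbhd e u :&: (W :\ v) = (nbhd e u :&: W) :\ v by rewrite setIDA.
  have Hv : v \in nbhd e u :&: W by rewrite !inE euv (setD1P vWu).2.
  by rewrite /d /dW (cardsD1 v (nbhd e u :&: W)) Hv add1n.
rewrite [X in _ + (_ + X)](eq_bigr (fun _ => phi R (tau u) d)); last first.
  move=> v /andP[vWu neuv]; rewrite /dW.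
  have -> : nbhd e u :&: (W :\ v) = (nbhd e u :&: W) :\ v by rewrite setIDA.
  have Hv : v \notin nbhd e u :&: W by rewrite !inE (negbTE neuv).
  by rewrite /d /dW (cardsD1 v (nbhd e u :&: W)) (negbTE Hv) add0n.
rewrite (eq_bigl (mem ((W :\ u) :&: nbhd e u))); last by move=> v; rewrite !inE.
rewrite [X in _ + (_ + X)](eq_bigl (mem ((W :\ u) :\: nbhd e u))); last by move=> v; rewrite !inE; case: (e u v); rewrite ?andbT ?andbF.
rewrite !sumr_const.
have Hd : #|(W :\ u) :&: nbhd e u| = d.
  by rewrite /d /dW Hn; apply: eq_card => v; rewrite !inE.
have HW : #|W| = (d + #|(W :\ u) :\: nbhd e u|).+1.
  by rewrite (cardsD1 u W) uW -Hd cardsID add1n.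
rewrite Hd HW -phi_identity !mulr_natl addrA /cost -/d.
by [].
Qed.

Lemma avg_identity (W : {set V}) :
  \sum_(v in W) (cost W v + Phi (W :\ v)) = #|W|%:R * Phi W.
Proof.
rewrite big_split /= /Phi.
rewrite (exchange_big_dep (mem W)) /=; last by move=> v u _ /setD1P[].
rewrite -big_split mulr_sumr; apply: eq_bigr => u uW.
rewrite -per_u //; congr (_ + _); apply: eq_bigl => v.
by rewrite !inE uW andbT andbC eq_sym.
Qed.

Lemma exists_good (W : {set V}) : W != set0 ->
  exists2 v, v \in W & cost W v + Phi (W :\ v) <= Phi W.
Proof.
move=> W0.
case: (pickP [pred v in W | cost W v + Phi (W :\ v) <= Phi W]) => [v /andP[vW Hv]|H].
  by exists v.
exfalso.
have: \sum_(v in W) Phi W < \sum_(v in W) (cost W v + Phi (W :\ v)).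
  apply: ltr_sum.
    case/set0Pn: W0 => x xW; apply/hasP; exists x => //; exact: mem_index_enum.
  move=> v vW; have := H v; rewrite /= vW /= => /negbT.
  by rewrite -ltNge.
by rewrite avg_identity sumr_const mulr_natl ltxx.
Qed.

Lemma dyn_build (W : {set V}) :
  exists D : {set V}, exists k, (#|D|%:R <= Phi W) /\ W \subset activated e tau D k.
Proof.
move: {2}#|W| (leqnn #|W|) => n; elim: n W => [|n IH] W HW.
  move: HW; rewrite leqn0 cards_eq0 => /eqP->.
  by exists set0, 0; split; [rewrite cards0 /Phi big_set0 | exact: sub0set].
case: (eqVneq W set0) => [->|W0].
  by exists set0, 0; split; [rewrite cards0 /Phi big_set0 | exact: sub0set].
have [v vW Hv] := exists_good W W0.
have HW' : (#|W :\ v| <= n)%N by rewrite (cardsD1 v W) vW add1n ltnS in HW.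
have [D [k [HD Hk]]] := IH (W :\ v) HW'.
move: Hv; rewrite /cost; case: leqP => Hle Hv.
  exists D, k.+1; split.
    by rewrite (le_trans HD) // (le_trans _ Hv) // add0r.
  apply/subsetP => w wW /=; rewrite inE; case: (eqVneq w v) => [->|wv].
    case vA: (v \in activated e tau D k) => //=.
    rewrite !inE vA /=; apply: leq_trans Hle _.
    rewrite /dW subset_leq_card //; apply/subsetP => x; rewrite !inE => /andP[xN xW].
    rewrite xN /=; apply: (subsetP Hk); rewrite !inE xW andbT; apply/eqP => xv.
    by move: xN; rewrite xv e_irr.
  by rewrite (subsetP Hk) // !inE wv wW.
exists (v |: D), k; split.
  apply: le_trans Hv; apply: (@le_trans _ _ (1 + #|D|%:R)); last by rewrite lerD2l.
  rewrite addrC natr1 ler_nat cardsU1.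
  by case: (v \in D).
apply/subsetP => w wW; case: (eqVneq w v) => [->|wv].
  by apply: (subsetP (act_sub _ _ _ _ _)); rewrite setU11.
apply: (subsetP (act_monoD _ _ _ _ _ _ (subsetUr [set v] D))).
by apply: (subsetP Hk); rewrite !inE wv wW.
Qed.

End Main.


Lemma phi_le (R : realFieldType) (a d : nat) : (a <= d)%N ->
  (a%:R / d.+1%:R : R) <= a%:R / a.+1%:R.
Proof.
move=> had; rewrite ler_wpM2l // lef_pV2 ?posrE ?ltr0Sn // ler_nat ltnS //.
Qed.

Lemma tangent (R : realFieldType) (x t : R) : 0 <= x -> 0 < t ->
  x / (x + 1) <= t / (t + 1) + (x - t) / (t + 1) ^+ 2.
Proof.
move=> hx ht.
have h1 : x + 1 != 0 by rewrite gt_eqF // ltr_wpDl.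
have h2 : t + 1 != 0 by rewrite gt_eqF // ltr_wpDl // ltW.
have -> : t / (t + 1) + (x - t) / (t + 1) ^+ 2 =
   x / (x + 1) + (x - t) ^+ 2 / ((x + 1) * (t + 1) ^+ 2) by field; rewrite h1 h2.
rewrite lerDl divr_ge0 ?sqr_ge0 // mulr_ge0 ?sqr_ge0 //; lra.
Qed.

Lemma frac_lt (R : realFieldType) (t c : R) : 0 < t -> t < c ->
  t / (t + 1) < c / (c + 1).
Proof.
move=> ht htc.
have h1 : 0 < t + 1 by lra.
have h2 : 0 < c + 1 by lra.
rewrite ltr_pdivrMr // mulrAC ltr_pdivlMr //; nra.
Qed.


Theorem proposition4 (R : realFieldType) (V : finType) (e : rel V)
  (e_sym : symmetric e) (e_irr : irreflexive e) (c t : R)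
  (hc : 0 < c) (ht : 0 < t)
  (htc : t <= c * eps e R / (#|V|)%:R) :
  (Ldyn e t)%:R < c / (c + 1) * (#|V|)%:R.
Proof.
set n := #|V|.
have n0 : (0 < n)%N.
  rewrite lt0n; apply/negP => /eqP n0.
  move: htc; rewrite /eps -/n n0 !mulr0n !invr0 !mulr0; lra.
have nR : (0 : R) < n%:R by rewrite ltr0n.
have hm : (#|edges e| < n * n)%N.
  case/card_gt0P: n0 => x _.
  apply: (@leq_ltn_trans #|[set p : V * V | e p.1 p.2]|).
    apply: leq_trans (leq_imset_card (fun p : V * V => [set p.1; p.2]) [set p : V * V | e p.1 p.2]).
    apply: subset_leq_card; apply/subsetP => E; rewrite inE => /existsP[y /existsP[z /andP[eyz /eqP->]]].
    by apply/imsetP; exists (y, z); rewrite ?inE.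
  apply: leq_trans (proper_card (B := [set: V * V]) _) _.
    by apply/properP; split; [exact: subsetT | exists (x, x); rewrite ?inE //= e_irr].
  by rewrite cardsT card_prod.
have htc' : t < c.
  have : c * (#|edges e|%:R / n%:R) / n%:R < c.
    by rewrite ltr_pdivrMr // ltr_pM2l // ltr_pdivrMr // -natrM ltr_nat.
  move: htc; rewrite /eps -/n => h1 h2; exact: le_lt_trans h1 h2.
have key : forall tau : thr V, valid_thr e tau -> avg_thr R tau <= t ->
    (dyn e tau)%:R < c / (c + 1) * n%:R.
  move=> tau vt hat.
  have [D [k [HD Hk]]] := @dyn_build R V e e_irr tau setT.
  have Hdyn : (dyn e tau <= #|D|)%N.
    apply: (dyn_le _ _ _ _ k); apply/eqP; rewrite eqEsubset subsetT; exact: Hk.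
  apply: (@le_lt_trans _ _ (#|D|%:R)); first by rewrite ler_nat.
  apply: le_lt_trans HD _.
  have Hphi : Phi R V e tau setT <= \sum_(u in [set: V]) (t / (t + 1) + ((tau u : nat)%:R - t) / (t + 1) ^+ 2).
    rewrite /Phi; apply: ler_sum => u _.
    have hle : ((tau u : nat) <= deg e u)%N by move/forallP: vt => /(_ u).
    rewrite /dW setIT /phi -/(deg e u) hle.
    have := @tangent R _ t (ler0n R (tau u)) ht; rewrite natr1 => Ht.
    exact: le_trans (@phi_le R _ _ hle) Ht.
  apply: le_lt_trans Hphi _.
  rewrite big_split /= sumr_const cardsT -/n -mulr_suml sumrB sumr_const cardsT -/n.
  under eq_bigl do rewrite in_setT.
  have S : \sum_i (tau i : nat)%:R <= t *+ n.
    by move: hat; rewrite /avg_thr ler_pdivrMr // natr_sum mulr_natr.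
  have hneg : (\sum_i (tau i : nat)%:R - t *+ n) / (t + 1) ^+ 2 <= 0.
    have tp : 0 < (t + 1) ^+ 2 by rewrite exprn_gt0 // ltr_wpDl // ltW.
    by rewrite ler_pdivrMr // mul0r subr_le0.
  rewrite -[X in _ < X]addr0; apply: ltr_leD => //.
  by rewrite -[t / (t + 1) *+ n]mulr_natr ltr_pM2r // frac_lt.
rewrite /Ldyn; apply: (big_ind (fun x : nat => x%:R < c / (c + 1) * n%:R)).
- by rewrite mulr_gt0 // divr_gt0 // ltr_wpDl // ltW.
- by move=> x y hx hy; rewrite /maxn; case: ifP.
- by move=> tau /andP[vt hat]; exact: key.
Qed.
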